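(* Consider the discounted Markov decision process and its optimal policy $\pi^*$ described in the context. For every traffic type $s\in\mathcal{S}$ there exists an integer $K_{th}(s)$ such that for all $k\in\{0,1,\dots,K\}$, $$\pi^*(s,k)=\begin{cases}0,& k<K_{th}(s),\\ 1,& k\ge K_{th}(s).\end{cases}$$
   Context: Let $\mathcal{S}=\{s_0,s_1,\dots,s_N\}$ be a finite set of traffic types, $s_0$ denoting the idle state, with probabilities $p(s)\in(0,1)$, $\sum_{s}p(s)=1$ (types in successive slots i.i.d.). Non-idle types have benefits $0<b_{s_1}<\dots<b_{s_N}$. Fix an integer $K\ge1$, a cost $c>0$, $p,q\in(0,1)$ and $\beta\in(0,1)$. States are $(s,k)$, $s\in\mathcal{S}$, $k\in\{0,\dots,K\}$; actions $a\in\{0,1\}$ (for $s\ne s_0$: $0$ = cellular mode, $1$ = D2D mode; for $s=s_0$: $0$ = accept D2D requests, $1$ = refuse). Transition probabilities $P\{(s',k')\mid(s,k),a\}$: for $s\ne s_0,k>0$: $p(s')\{(1-a)+a(1-q)\}$ if $k'=k$, $p(s')qa$ if $k'=k-1$; for $s\ne s_0,k=0$: $p(s')$ if $k'=0$; for $s=s_0,k<K$: $p(s')\{a+(1-a)(1-p)\}$ if $k'=k$, $p(s')p(1-a)$ if $k'=k+1$; for $s=s_0,k=K$: $p(s')$ if $k'=K$; otherwise $0$. Expected rewards: $\mu(s_0,k,a)=-cp(1-a)$; for $s\ne s_0$, $\mu(s,k,a)=q\,a\,b_s\,I(k>0)$. $V^*$ is the optimal discounted value function, the unique solution of $V^*(s,k)=\max_{a\in\{0,1\}}\{\mu(s,k,a)+\beta\sum_{(s',k')}P\{(s',k')\mid(s,k),a\}V^*(s',k')\}$.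 The optimal policy $\pi^*$: $\pi^*(s,0)=0$ for $s\ne s_0$, $\pi^*(s_0,K)=1$, and in every other state $\pi^*(s,k)=0$ if action $0$ attains the maximum in this Bellman equation and $\pi^*(s,k)=1$ otherwise. *)

(* Defs.v *)
From HB Require Import structures.
From mathcomp Require Import all_boot all_order all_algebra.
From mathcomp Require Import reals.
Set Implicit Arguments. Unset Strict Implicit. Unset Printing Implicit Defensive.
Import Order.TTheory GRing.Theory Num.Theory.
Local Open Scope ring_scope.

(* Traffic types s_0,...,s_N are 'I_N.+1, with s_0 (value 0) the idle state.
   Counters k in {0,...,K} are 'I_K.+1.
   Actions a in {0,1} are booleans: false = 0, true = 1 (a%:R as a real). *)

Definition idle (N : nat) (s : 'I_N.+1) : bool := (val s == 0%N).

Definition trans (R : realType) (N K : nat) (ps : 'I_N.+1 -> R) (p q : R)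
  (s : 'I_N.+1) (k : 'I_K.+1) (a : bool) (s' : 'I_N.+1) (k' : 'I_K.+1) : R :=
  let ar : R := a%:R in
  if ~~ idle s then
    (if (0 < val k)%N then
       (if val k' == val k then ps s' * ((1 - ar) + ar * (1 - q))
        else if val k' == (val k).-1 then ps s' * q * ar
        else 0)
     else (if val k' == 0%N then ps s' else 0))
  else
    (if (val k < K)%N then
       (if val k' == val k then ps s' * (ar + (1 - ar) * (1 - p))
        else if val k' == (val k).+1 then ps s' * p * (1 - ar)
        else 0)
     else (if val k' == K then ps s' else 0)).

Definition reward (R : realType) (N K : nat) (b : 'I_N.+1 -> R) (c p q : R)
  (s : 'I_N.+1) (k : 'I_K.+1) (a : bool) : R :=
  let ar : R := a%:R in
  if idle s then - c * p * (1 - ar)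
  else q * ar * b s * (if (0 < val k)%N then 1 else 0).

Definition Qval (R : realType) (N K : nat) (ps : 'I_N.+1 -> R)
  (b : 'I_N.+1 -> R) (c p q beta : R) (V : 'I_N.+1 -> 'I_K.+1 -> R)
  (s : 'I_N.+1) (k : 'I_K.+1) (a : bool) : R :=
  @reward R N K b c p q s k a +
  beta * \sum_(s' : 'I_N.+1) \sum_(k' : 'I_K.+1) @trans R N K ps p q s k a s' k' * V s' k'.

Definition bellman (R : realType) (N K : nat) (ps : 'I_N.+1 -> R)
  (b : 'I_N.+1 -> R) (c p q beta : R) (V : 'I_N.+1 -> 'I_K.+1 -> R) : Prop :=
  forall s k, V s k = Num.max (Qval ps b c p q beta V s k false)
                              (Qval ps b c p q beta V s k true).

Definition pistar (R : realType) (N K : nat) (ps : 'I_N.+1 -> R)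
  (b : 'I_N.+1 -> R) (c p q beta : R) (V : 'I_N.+1 -> 'I_K.+1 -> R)
  (s : 'I_N.+1) (k : 'I_K.+1) : bool :=
  if ~~ idle s && (val k == 0%N) then false
  else if idle s && (val k == K) then true
  else Qval ps b c p q beta V s k true > Qval ps b c p q beta V s k false.

(* Main.v *)
Require Import Defs.
From HB Require Import structures.
From mathcomp Require Import all_boot all_order all_algebra.
From mathcomp Require Import reals.
From mathcomp Require Import ring lra.
Import Order.TTheory GRing.Theory Num.Theory.
Local Open Scope ring_scope.


Lemma max_lip (R : realType) (a b c d f : R) :
  `|a - c| <= f -> `|b - d| <= f -> `|Num.max a b - Num.max c d| <= f.
Proof.
rewrite !ler_norml => /andP[h1 h2] /andP[h3 h4].
rewrite !maxEle; case: ifP => h5; case: ifP => h6; apply/andP; split; lra.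
Qed.

Lemma conv_bound (R : realType) (a g x y e : R) :
  0 <= a -> 0 <= g -> a + g = 1 -> `|x| <= e -> `|y| <= e -> `|a * x + g * y| <= e.
Proof.
move=> ha hg hag hx hy.
apply: le_trans (ler_normD _ _) _.
rewrite !normrM (ger0_norm ha) (ger0_norm hg).
have -> : e = a * e + g * e by rewrite -mulrDl hag mul1r.
by apply: lerD; apply: ler_wpM2l.
Qed.

Lemma geo_le0 (R : realType) (beta x e : R) :
  0 < beta < 1 -> (forall n : nat, x <= beta ^+ n * e) -> x <= 0.
Proof.
move=> /andP[hb0 hb1] H.
rewrite leNgt; apply/negP => hx.
have he : x <= e by have := H 0%N; rewrite expr0 mul1r.
set t := beta^-1 - 1.
have ht : 0 < t by rewrite /t subr_gt0 invf_gt1.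
have bern : forall n : nat, 1 + n%:R * t <= (1 + t) ^+ n.
  elim=> [|n IH]; first by rewrite mul0r addr0 expr0.
  rewrite exprS.
  have h0 : 0 <= n%:R * t by apply: mulr_ge0 => //; apply: ltW.
  apply: le_trans (_ : (1 + t) * (1 + n%:R * t) <= _); last first.
    by apply: ler_wpM2l => //; lra.
  rewrite -natr1; nra.
have hbt : 1 + t = beta^-1 by rewrite /t addrC subrK.
set n := Num.Def.archi_bound (e / (x * t)).
have hn := @archi_boundP R (e / (x * t)).
have hpos : 0 <= e / (x * t).
  apply: divr_ge0; [lra | apply: mulr_ge0; lra].
have := hn hpos; rewrite -/n => hlt.
have hbn : 0 < beta ^+ n by apply: exprn_gt0.
have h : x / beta ^+ n <= e by rewrite ler_pdivrMr // mulrC; exact: H.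
have : x * (1 + n%:R * t) <= e.
  apply: le_trans h.
  rewrite -exprVn -hbt; apply: ler_wpM2l; [lra | exact: bern].
move=> h2.
have hxt : 0 < x * t by apply: mulr_gt0.
move: hlt; rewrite ltr_pdivrMr // => hlt.
nra.
Qed.

Lemma thresh (K : nat) (P : nat -> bool) :
  (forall i j, (i <= j)%N -> (j <= K)%N -> P i -> P j) ->
  exists Kth : int, forall k, (k <= K)%N -> P k = (Kth <= k%:Z).
Proof.
move=> Hup.
exists (find P (iota 0 K.+1))%:Z => k hk.
rewrite lez_nat.
case: (leqP (find P (iota 0 K.+1)) k) => h.
- have hf : (find P (iota 0 K.+1) < size (iota 0 K.+1))%N.
    by rewrite size_iota; apply: leq_ltn_trans h _.
  rewrite -has_find in hf.
  have := nth_find 0%N hf.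
  rewrite nth_iota; last by move: hf; rewrite has_find size_iota.
  rewrite add0n => hP.
  by rewrite (Hup _ _ h hk hP).
- have := before_find 0%N h.
  by rewrite nth_iota // add0n => ->.
Qed.


Definition Wf (R : realType) (N K : nat) (ps : 'I_N.+1 -> R)
  (V : 'I_N.+1 -> 'I_K.+1 -> R) (j : nat) : R :=
  \sum_(s' : 'I_N.+1) ps s' * V s' (inord j).

Definition qf (R : realType) (N K : nat) (b : 'I_N.+1 -> R) (c p q beta : R)
  (W : nat -> R) (s : 'I_N.+1) (k : nat) (a : bool) : R :=
  let ar : R := a%:R in
  if idle s then
    (if (k < K)%N then - c * p * (1 - ar) +
        beta * ((ar + (1 - ar) * (1 - p)) * W k + p * (1 - ar) * W k.+1)
     else - c * p * (1 - ar) + beta * W K)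
  else if (0 < k)%N then q * ar * b s + beta * (((1 - ar) + ar * (1 - q)) * W k + q * ar * W k.-1)
  else beta * W 0%N.

Arguments qf {R N} K b c p q beta W s k a.
Arguments Wf {R N K} ps V j.

Lemma sum_delta (R : realType) (K : nat) (F : 'I_K.+1 -> R) (A : R) (j : nat) :
  (j <= K)%N -> \sum_(k' : 'I_K.+1) (if val k' == j then A else 0) * F k' = A * F (inord j).
Proof.
move=> hj.
rewrite (bigD1 (inord j)) //= inordK // eqxx big1 ?addr0 // => i hi.
case: eqP => [e|]; last by rewrite mul0r.
by move: hi; rewrite -e inord_val eqxx.
Qed.

Lemma sum_two (R : realType) (K : nat) (F : 'I_K.+1 -> R) (A B : R) (i j : nat) :
  i != j -> (i <= K)%N -> (j <= K)%N ->
  \sum_(k' : 'I_K.+1) (if val k' == i then A else if val k' == j then B else 0) * F k'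
  = A * F (inord i) + B * F (inord j).
Proof.
move=> hij hi hj.
rewrite -(@sum_delta R K F A i hi) -(@sum_delta R K F B j hj) -big_split /=.
apply: eq_bigr => k' _.
case: eqP => [e|ne]; case: eqP => [e'|ne'] //=; try ring.
by move: hij; rewrite -e -e' eqxx.
Qed.

Lemma Qval_qf (R : realType) (N K : nat) (ps : 'I_N.+1 -> R)
  (b : 'I_N.+1 -> R) (c p q beta : R) (V : 'I_N.+1 -> 'I_K.+1 -> R) s k a :
  Qval ps b c p q beta V s k a = qf K b c p q beta (Wf ps V) s (val k) a.
Proof.
have hkK : (val k <= K)%N by have := ltn_ord k.
rewrite /Qval. rewrite /reward. rewrite /qf. rewrite /trans. rewrite /Wf.
case hs: (idle s) => /=.
- case hk: (val k < K)%N.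
  + rewrite (eq_bigr (fun s' => (a%:R + (1 - a%:R) * (1 - p)) * (ps s' * V s' (inord (val k)))
        + (p * (1 - a%:R)) * (ps s' * V s' (inord (val k).+1)))); last first.
      move=> s' _; rewrite sum_two //; [ring | by rewrite (ltn_eqF (ltnSn _))].
    by rewrite big_split /= -!mulr_sumr.
  + rewrite (eq_bigr (fun s' => ps s' * V s' (inord K))); last first.
      by move=> s' _; rewrite sum_delta.
    by [].
- case hk: (0 < val k)%N.
  + rewrite (eq_bigr (fun s' => ((1 - a%:R) + a%:R * (1 - q)) * (ps s' * V s' (inord (val k)))
        + (q * a%:R) * (ps s' * V s' (inord (val k).-1)))); last first.
      move=> s' _; rewrite sum_two //; first ring.
      + by rewrite eq_sym -{2}(prednK hk) (ltn_eqF (ltnSn _)).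
      + by apply: leq_trans (leq_pred _) hkK.
    rewrite big_split /= -!mulr_sumr mulr1; ring.
  + rewrite (eq_bigr (fun s' => ps s' * V s' (inord 0))); last first.
      by move=> s' _; rewrite sum_delta.
    by rewrite mulr0 add0r.
Qed.


Definition conc (R : realType) (K : nat) (W : nat -> R) :=
  forall k, (1 <= k)%N -> (k.+1 <= K)%N -> W k.+1 - W k <= W k - W k.-1.

Lemma max0_lip (R : realType) (b u v : R) : u <= v ->
  0 <= Num.max 0 (b - u) - Num.max 0 (b - v) <= v - u.
Proof. move=> h; rewrite !maxEle; case: ifP; case: ifP => ? ?; apply/andP; split; lra. Qed.

Lemma max0_ge0 (R : realType) (z : R) : 0 <= Num.max 0 z.
Proof. by rewrite le_max lexx. Qed.

Lemma G_nonidle (R : realType) (N K : nat) (b : 'I_N.+1 -> R) (c p q beta : R)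
  (W : nat -> R) (s : 'I_N.+1) (j : nat) :
  0 < q -> idle s = false ->
  Num.max (qf K b c p q beta W s j false) (qf K b c p q beta W s j true) =
  beta * W j + q * (if j == 0%N then 0 else Num.max 0 (b s - beta * (W j - W j.-1))).
Proof.
move=> hq hs; rewrite /qf hs /=.
case: j => [|j] /=; first by rewrite maxxx mulr0 addr0.
rewrite !maxEle; case: ifP; case: ifP => h1 h2; nra.
Qed.

Lemma G_idle (R : realType) (N K : nat) (b : 'I_N.+1 -> R) (c p q beta : R)
  (W : nat -> R) (s : 'I_N.+1) (j : nat) :
  0 < p -> 0 < c -> (j <= K)%N -> idle s = true ->
  Num.max (qf K b c p q beta W s j false) (qf K b c p q beta W s j true) =
  beta * W j + p * (if (j < K)%N then Num.max 0 (beta * (W j.+1 - W j) - c) else 0).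
Proof.
move=> hp hc hj hs; rewrite /qf hs /=.
case: ifP => hjK.
  rewrite !maxEle; case: ifP; case: ifP => h1 h2; nra.
have -> : j = K by apply/eqP; rewrite eqn_leq hj leqNgt hjK.
rewrite !maxEle; case: ifP => h1; nra.
Qed.

Lemma max0_lip' (R : realType) (c u v : R) : u <= v ->
  0 <= Num.max 0 (v - c) - Num.max 0 (u - c) <= v - u.
Proof. move=> h; rewrite !maxEle; case: ifP; case: ifP => ? ?; apply/andP; split; lra. Qed.

Definition Gf (R : realType) (N K : nat) (b : 'I_N.+1 -> R) (c p q beta : R)
  (W : nat -> R) (s : 'I_N.+1) (j : nat) :=
  Num.max (qf K b c p q beta W s j false) (qf K b c p q beta W s j true).

Arguments Gf {R N} K b c p q beta W s j.
Arguments conc {R} K W.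

Lemma G_conc (R : realType) (N K : nat) (b : 'I_N.+1 -> R) (c p q beta : R)
  (W : nat -> R) (s : 'I_N.+1) :
  0 < c -> 0 < p < 1 -> 0 < q < 1 -> 0 < beta < 1 -> conc K W ->
  forall k, (1 <= k)%N -> (k.+1 <= K)%N ->
  Gf K b c p q beta W s k.+1 - Gf K b c p q beta W s k <=
  Gf K b c p q beta W s k - Gf K b c p q beta W s k.-1.
Proof.
move=> hc /andP[hp0 hp1] /andP[hq0 hq1] /andP[hb0 hb1] hW k hk1 hkK.
have hc1 := hW k hk1 hkK.
have hd1 : beta * (W k.+1 - W k) <= beta * (W k - W k.-1) by apply: ler_wpM2l => //; apply: ltW.
rewrite /Gf; case hs: (idle s).
- have hkm : (k.-1 <= K)%N by apply: leq_trans (leq_pred _) (ltnW hkK).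
  rewrite (@G_idle R N K b c p q beta W s _ hp0 hc hkK hs).
  rewrite (@G_idle R N K b c p q beta W s _ hp0 hc (ltnW hkK) hs).
  rewrite (@G_idle R N K b c p q beta W s _ hp0 hc hkm hs).
  rewrite hkK (leq_ltn_trans (leq_pred _) hkK).
  have hk' : k.-1.+1 = k by rewrite prednK.
  rewrite hk'.
  set x1 := Num.max 0 (beta * (W k - W k.-1) - c).
  set x2 := Num.max 0 (beta * (W k.+1 - W k) - c).
  have H1 := @max0_lip' R c _ _ hd1; rewrite -/x1 -/x2 in H1.
  move/andP: H1 => [H1a H1b].
  set x3 := (if (k.+1 < K)%N then _ else _).
  have H2 : x3 <= x2.
    rewrite /x3; case: ifP => hk2; last exact: max0_ge0.
    have hc2 := hW k.+1 isT hk2.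
    have hd2 : beta * (W k.+2 - W k.+1) <= beta * (W k.+1 - W k) by apply: ler_wpM2l => //; apply: ltW.
    by move/andP: (@max0_lip' R c _ _ hd2) => [+ _]; rewrite subr_ge0.
  nra.
- rewrite !(@G_nonidle R N K b c p q beta W s _ hq0 hs).
  have -> : (k.+1 == 0%N) = false by [].
  have -> : (k == 0%N) = false by case: k hk1 {hc1 hd1 hkK}.
  set y1 := Num.max 0 (b s - beta * (W k - W k.-1)).
  set y2 := Num.max 0 (b s - beta * (W k.+1 - W k)).
  have H1 := @max0_lip R (b s) _ _ hd1; rewrite -/y1 -/y2 in H1.
  move/andP: H1 => [H1a H1b].
  set y0 := (if k.-1 == 0%N then _ else _).
  have H2 : y0 <= y1.
    rewrite /y0; case: ifP => hk2; first exact: max0_ge0.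
    have hk2' : (1 <= k.-1)%N by rewrite lt0n hk2.
    have hk2K : (k.-1.+1 <= K)%N by rewrite prednK //; apply: ltnW.
    have hc2 := hW k.-1 hk2' hk2K.
    rewrite prednK // in hc2.
    have hd2 : beta * (W k - W k.-1) <= beta * (W k.-1 - W k.-1.-1) by apply: ler_wpM2l => //; apply: ltW.
    by move/andP: (@max0_lip R (b s) _ _ hd2) => [+ _]; rewrite subr_ge0.
  nra.
Qed.


Definition Phi (R : realType) (N K : nat) (ps : 'I_N.+1 -> R) (b : 'I_N.+1 -> R) (c p q beta : R)
  (W : nat -> R) (k : nat) : R :=
  \sum_(s : 'I_N.+1) ps s * Gf K b c p q beta W s k.
Arguments Phi {R N} K ps b c p q beta W k.

Lemma Phi_conc (R : realType) (N K : nat) (ps : 'I_N.+1 -> R) (b : 'I_N.+1 -> R) (c p q beta : R)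
  (W : nat -> R) :
  (forall s, 0 <= ps s) ->
  0 < c -> 0 < p < 1 -> 0 < q < 1 -> 0 < beta < 1 -> conc K W ->
  conc K (Phi K ps b c p q beta W).
Proof.
move=> hps hc hp hq hb hW k hk1 hkK.
rewrite -subr_ge0.
have -> : (Phi K ps b c p q beta W k - Phi K ps b c p q beta W k.-1) -
   (Phi K ps b c p q beta W k.+1 - Phi K ps b c p q beta W k) =
   \sum_(s : 'I_N.+1) ps s * ((Gf K b c p q beta W s k - Gf K b c p q beta W s k.-1) -
      (Gf K b c p q beta W s k.+1 - Gf K b c p q beta W s k)).
  rewrite /Phi -!sumrB; apply: eq_bigr => s _; ring.
apply: sumr_ge0 => s _; apply: mulr_ge0 => //.
rewrite subr_ge0; exact: G_conc.
Qed.

Lemma qf_lip (R : realType) (N K : nat) (b : 'I_N.+1 -> R) (c p q beta : R)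
  (W U : nat -> R) (e : R) s k a :
  0 < p < 1 -> 0 < q < 1 -> 0 < beta < 1 ->
  (forall j, (j <= K)%N -> `|W j - U j| <= e) -> (k <= K)%N ->
  `|qf K b c p q beta W s k a - qf K b c p q beta U s k a| <= beta * e.
Proof.
move=> /andP[hp0 hp1] /andP[hq0 hq1] /andP[hb0 hb1] HWU hk.
have har : 0 <= (a%:R : R) <= 1 by case: a; rewrite ?ler01 ?lexx.
move/andP: har => [ha0 ha1].
have he : 0 <= e by apply: le_trans (normr_ge0 _) (HWU _ hk).
rewrite /qf; case: (idle s).
- case: ifP => hkK.
  + set al := (a%:R + (1 - a%:R) * (1 - p)); set ga := p * (1 - a%:R).
    have -> : - c * p * (1 - a%:R) + beta * (al * W k + ga * W k.+1) -
      (- c * p * (1 - a%:R) + beta * (al * U k + ga * U k.+1)) =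
      beta * (al * (W k - U k) + ga * (W k.+1 - U k.+1)) by ring.
    rewrite normrM (ger0_norm (ltW hb0)); apply: ler_wpM2l; first exact: ltW.
    apply: conv_bound; rewrite /al /ga; try nra.
    * exact: HWU.
    * exact: HWU.
  + have -> : - c * p * (1 - a%:R) + beta * W K - (- c * p * (1 - a%:R) + beta * U K) =
      beta * (W K - U K) by ring.
    rewrite normrM (ger0_norm (ltW hb0)); apply: ler_wpM2l; first exact: ltW.
    exact: HWU.
- case: ifP => hk0.
  + set al := ((1 - a%:R) + a%:R * (1 - q)); set ga := q * a%:R.
    have -> : q * a%:R * b s + beta * (al * W k + ga * W k.-1) -
      (q * a%:R * b s + beta * (al * U k + ga * U k.-1)) =
      beta * (al * (W k - U k) + ga * (W k.-1 - U k.-1)) by ring.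
    rewrite normrM (ger0_norm (ltW hb0)); apply: ler_wpM2l; first exact: ltW.
    apply: conv_bound; rewrite /al /ga; try nra.
    * exact: HWU.
    * apply: HWU; exact: leq_trans (leq_pred _) hk.
  + have -> : beta * W 0%N - beta * U 0%N = beta * (W 0%N - U 0%N) by ring.
    rewrite normrM (ger0_norm (ltW hb0)); apply: ler_wpM2l; first exact: ltW.
    exact: HWU.
Qed.

Lemma Phi_lip (R : realType) (N K : nat) (ps : 'I_N.+1 -> R) (b : 'I_N.+1 -> R) (c p q beta : R)
  (W U : nat -> R) (e : R) k :
  (forall s, 0 <= ps s) -> \sum_(s : 'I_N.+1) ps s = 1 ->
  0 < p < 1 -> 0 < q < 1 -> 0 < beta < 1 ->
  (forall j, (j <= K)%N -> `|W j - U j| <= e) -> (k <= K)%N ->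
  `|Phi K ps b c p q beta W k - Phi K ps b c p q beta U k| <= beta * e.
Proof.
move=> hps hsum hp hq hb HWU hk.
rewrite /Phi -sumrB.
apply: le_trans (ler_norm_sum _ _ _) _.
apply: le_trans (_ : \sum_(s : 'I_N.+1) ps s * (beta * e) <= _); last first.
  by rewrite -mulr_suml hsum mul1r.
apply: ler_sum => s _.
rewrite -mulrBr normrM (ger0_norm (hps s)); apply: ler_wpM2l => //.
rewrite /Gf; apply: max_lip; exact: qf_lip.
Qed.

Lemma D_mono (R : realType) (K : nat) (W : nat -> R) : conc K W ->
  forall m i, (1 <= i)%N -> (i + m <= K)%N -> W (i + m)%N - W (i + m)%N.-1 <= W i - W i.-1.
Proof.
move=> hW; elim=> [|m IH] i hi hm; first by rewrite addn0 lexx.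
apply: le_trans (IH i hi _); last by apply: leq_trans hm; rewrite leq_add2l.
rewrite addnS /=.
apply: hW; first by apply: leq_trans hi (leq_addr _ _).
by rewrite -addnS.
Qed.

Lemma val_inord (K j : nat) : (j <= K)%N -> val (@inord K j) = j.
Proof. move=> h; exact: inordK. Qed.

Theorem proposition1 (R : realType) (N K : nat) (ps : 'I_N.+1 -> R)
  (b : 'I_N.+1 -> R) (c p q beta : R)
  (hps : forall s, 0 < ps s < 1)
  (hsum : \sum_(s : 'I_N.+1) ps s = 1)
  (hb0 : forall s : 'I_N.+1, (0 < val s)%N -> 0 < b s)
  (hbinc : forall s t : 'I_N.+1, (0 < val s)%N -> (val s < val t)%N -> b s < b t)
  (hK : (1 <= K)%N) (hc : 0 < c) (hp : 0 < p < 1) (hq : 0 < q < 1)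
  (hbeta : 0 < beta < 1)
  (V : 'I_N.+1 -> 'I_K.+1 -> R)
  (hV : bellman ps b c p q beta V) :
  forall s : 'I_N.+1, exists Kth : int, forall k : 'I_K.+1,
    pistar ps b c p q beta V s k = (Kth <= (val k)%:Z).
Proof.
have hps0 : forall s, 0 <= ps s by move=> s; case/andP: (hps s) => /ltW.
have fixW : forall j, (j <= K)%N -> Wf ps V j = Phi K ps b c p q beta (Wf ps V) j.
  move=> j hj; rewrite {1}/Wf /Phi; apply: eq_bigr => s _; congr (_ * _).
  by rewrite hV /Gf !Qval_qf val_inord.
set W := Wf ps V in fixW *.
pose U n := iter n (Phi K ps b c p q beta) (fun _ => 0).
have concU : forall n, conc K (U n).
  elim=> [|n IH]; first by move=> k _ _ /=; rewrite subrr.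
  exact: Phi_conc.
set e0 := \sum_(j < K.+1) `|W j|.
have hbn : forall n j, (j <= K)%N -> `|W j - U n j| <= beta ^+ n * e0.
  elim=> [|n IH] j hj.
    rewrite /= subr0 expr0 mul1r /e0 (bigD1 (@Ordinal K.+1 j hj)) //= lerDl.
    by apply: sumr_ge0 => i _.
  rewrite fixW // exprS -mulrA.
  exact: Phi_lip.
have concW : conc K W.
  move=> k hk1 hkK; rewrite -subr_ge0 -oppr_le0.
  apply: (@geo_le0 R beta _ (4 * e0) hbeta) => n.
  have := concU n k hk1 hkK.
  have := hbn n k.+1 hkK.
  have := hbn n k (ltnW hkK).
  have := hbn n k.-1 (leq_trans (leq_pred _) (ltnW hkK)).
  rewrite mulrCA; set t := beta ^+ n * e0.
  rewrite !ler_norml; lra.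
case/andP: hp => hp0 hp1; case/andP: hq => hq0 hq1; case/andP: hbeta => hbe0 hbe1.
move=> s.
pose P i := pistar ps b c p q beta V s (inord i).
have [Kth HK] : exists Kth : int, forall k, (k <= K)%N -> P k = (Kth <= k%:Z).
  apply: thresh => i j hij hjK.
  have hiK : (i <= K)%N by apply: leq_trans hij hjK.
  rewrite /P /pistar !Qval_qf !val_inord //.
  case hs: (idle s) => /=.
  - have key : forall i, (i < K)%N -> (qf K b c p q beta W s i false < qf K b c p q beta W s i true)
        = (beta * (W i.+1 - W i) < c).
      move=> i0 hi0; rewrite /qf hs hi0 -subr_gt0 /=.
      have -> : - c * p * (1 - 1) + beta * ((1 + (1 - 1) * (1 - p)) * W i0 + p * (1 - 1) * W i0.+1) -
         (- c * p * (1 - 0) + beta * ((0 + (1 - 0) * (1 - p)) * W i0 + p * (1 - 0) * W i0.+1))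
         = p * (c - beta * (W i0.+1 - W i0)) by ring.
      by rewrite pmulr_rgt0 // subr_gt0.
    rewrite -/W; case: (eqVneq j K) => [_|hjK'] //.
    have hjlt : (j < K)%N by rewrite ltn_neqAle hjK' hjK.
    have hilt : (i < K)%N by apply: leq_ltn_trans hij hjlt.
    rewrite (ltn_eqF hilt) !key //.
    have hs' : (i.+1 + (j - i) <= K)%N by rewrite addSn subnKC.
    have hD := @D_mono R K W concW (j - i) i.+1 (ltn0Sn i) hs'.
    rewrite addSn subnKC // in hD.
    move=> hi; apply: le_lt_trans hi.
    apply: ler_wpM2l; first exact: ltW.
    exact: hD.
  - have key : forall i, (0 < i)%N -> (qf K b c p q beta W s i false < qf K b c p q beta W s i true)
        = (beta * (W i - W i.-1) < b s).
      move=> i0 hi0; rewrite /qf hs hi0 -subr_gt0 /=.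
      have -> : q * 1 * b s + beta * ((1 - 1 + 1 * (1 - q)) * W i0 + q * 1 * W i0.-1) -
         (q * 0 * b s + beta * ((1 - 0 + 0 * (1 - q)) * W i0 + q * 0 * W i0.-1))
         = q * (b s - beta * (W i0 - W i0.-1)) by ring.
      by rewrite pmulr_rgt0 // subr_gt0.
    rewrite -/W; case: (posnP i) => [_ //|hi0].
    have hj0 : (0 < j)%N by apply: leq_trans hi0 hij.
    rewrite ?(gtn_eqF hi0) (gtn_eqF hj0) !key //.
    have hs' : (i + (j - i) <= K)%N by rewrite subnKC.
    have hD := @D_mono R K W concW (j - i) i hi0 hs'.
    rewrite subnKC // in hD.
    move=> hi; apply: le_lt_trans hi.
    apply: ler_wpM2l; first exact: ltW.
    exact: hD.
exists Kth => k.
have := HK (val k) (ltn_ord k); rewrite /P inord_val => ->; done.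
Qed.
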